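(* Let $G$ be a simple, biconnected, planar graph of maximum degree at most $k$, and let $\mathcal{T}$ be its SPQR-tree, rooted at a Q-node. Let $\mu$ be a node of $\mathcal{T}$ that is not the root, let $\mu'$ be its parent, and let $\{s,t\}$ be the poles of $\mu$. Then for every $v\in\{s,t\}$, the degree of $v$ in the pertinent graph of $\mu$ is at most $k-2$ if $\mu'$ is a P-node or an R-node, and at most $k-1$ otherwise (i.e., if $\mu'$ is an S-node or a Q-node).
   Context: The SPQR-tree (with Q-nodes) of a biconnected graph $G$ is the standard decomposition tree of $G$ into its triconnected components. Each node $\mu$ has a skeleton graph $\mathrm{skel}(\mu)$: for a Q-node it consists of two parallel edges, one of which (the real edge) is an edge of $G$; for an S-node it is a simple cycle of length at least three; for a P-node it is a bundle of at least three parallel edges between two vertices; for an R-node it is a simple triconnected graph. Non-real skeleton edges are virtual edges; each virtual edge of $\mathrm{skel}(\mu)$ corresponds to a tree neighbour $\mu''$ of $\mu$ and to a twin virtual edge in $\mathrm{skel}(\mu'')$. The leaves are exactly the Q-nodes, one per edge of $G$; no two S-nodes and no two P-nodes are adjacent. When the tree is rooted at a Q-node, every non-root node $\mu$ has exactly one virtual edge (the reference edge) whose twin lies in the skeleton of its parent; the endpoints $s,t$ of the reference edge are the poles of $\mu$. The pertinent graph of $\mu$ is the subgraph of $G$ formed by the real edges of the Q-nodes in the subtree rooted at $\mu$ (equivalently, obtained by recursively replacing the non-reference virtual edges of $\mathrm{skel}(\mu)$ by the skeletons of the corresponding children). *)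

(* Defs.v *)
From HB Require Import structures.
From mathcomp Require Import all_boot.
From mathcomp Require Import fingroup perm.
Set Implicit Arguments. Unset Strict Implicit. Unset Printing Implicit Defensive.

Definition simple_graph (V : finType) (g : rel V) : Prop :=
  symmetric g /\ irreflexive g.

Definition connected_on (T : finType) (e : rel T) (A : {set T}) : Prop :=
  forall x y, x \in A -> y \in A ->
    connect [rel a b | [&& a \in A, b \in A & e a b]] x y.

Definition biconnected (V : finType) (g : rel V) : Prop :=
  [/\ 3 <= #|V|, connected_on g setT & forall x, connected_on g (setT :\ x)].

Definition max_degree_le (V : finType) (g : rel V) (k : nat) : Prop :=
  forall x, #|[set y | g x y]| <= k.

Definition Gedges (V : finType) (g : rel V) : {set {set V}} :=
  [set [set p.1; p.2] | p in [set p : V * V | g p.1 p.2]].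

(* Planarity (combinatorial embeddings / rotation systems):            *)
(* a connected graph is planar iff it has a rotation system whose     *)
(* faces satisfy Euler's formula  V - E + F = 2.                       *)

Definition dart (V : finType) (g : rel V) := {d : V * V | g d.1 d.2}.

Definition planar (V : finType) (g : rel V) : Prop :=
  exists (rho : {perm dart g}) (rev : dart g -> dart g),
  [/\ forall d, val (rev d) = ((val d).2, (val d).1),
      forall d, (val (rho d)).1 = (val d).1,
      forall d d', (val d).1 = (val d').1 -> fconnect rho d d' &
      (#|V| + fcard (fun d => rho (rev d)) predT).*2 = #|{: dart g}| + 4].

(*  N      : nodes of the tree, t : tree adjacency                     *)
(*  skelV mu : vertex set of skel(mu) (skeleton vertices are vertices  *)
(*             of G)                                                   *)
(*  qend mu  : endpoints of the real edge of a Q-node                  *)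
(*  vend mu nu : endpoints of the virtual edge of skel(mu) associated  *)
(*             to the tree neighbour nu (its twin is vend nu mu)       *)
(* The skeleton edges of mu are indexed by option N: None is the real  *)
(* edge (present iff mu is a Q-node), Some nu the virtual edge for the *)
(* tree neighbour nu.                                                  *)

Inductive spqr_kind := Qnode | Snode | Pnode | Rnode.

Definition isQ k := if k is Qnode then true else false.
Definition isS k := if k is Snode then true else false.
Definition isP k := if k is Pnode then true else false.

Section SPQR.
Variables (V N : finType) (g : rel V) (t : rel N) (kind : N -> spqr_kind)
  (qend : N -> {set V}) (vend : N -> N -> {set V}) (skelV : N -> {set V}).

Definition is_tree : Prop :=
  [/\ symmetric t, irreflexive t, connected_on t setT &
      #|[set p : N * N | t p.1 p.2]| = (#|N|).-1.*2].

Definition sk_edges (mu : N) : {set option N} :=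
  [set o | if o is Some nu then t mu nu else isQ (kind mu)].

Definition sk_end (mu : N) (o : option N) : {set V} :=
  if o is Some nu then vend mu nu else qend mu.

Definition sk_deg (mu : N) (x : V) : nat :=
  #|[set o in sk_edges mu | x \in sk_end mu o]|.

Definition sk_adj (mu : N) : rel V :=
  fun x y => (x != y) && [exists o in sk_edges mu, sk_end mu o == [set x; y]].

Definition skel_wf (mu : N) : Prop :=
  [/\ forall o, o \in sk_edges mu ->
        #|sk_end mu o| = 2 /\ sk_end mu o \subset skelV mu &
      forall x, x \in skelV mu -> 0 < sk_deg mu x].

Definition skel_kind_ok (mu : N) : Prop :=
  match kind mu with
  | Qnode => (* two parallel edges: the real edge and one virtual edge *)
      [/\ #|sk_edges mu| = 2, qend mu \in Gedges g, skelV mu = qend mu &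
          forall nu, t mu nu -> vend mu nu = qend mu]
  | Snode => (* simple cycle of length >= 3: connected, 2-regular *)
      [/\ 3 <= #|skelV mu|, forall x, x \in skelV mu -> sk_deg mu x = 2 &
          connected_on (sk_adj mu) (skelV mu)]
  | Pnode => (* bundle of >= 3 parallel edges between two vertices *)
      #|skelV mu| = 2 /\ 3 <= #|sk_edges mu|
  | Rnode => (* simple triconnected graph *)
      [/\ forall o o', o \in sk_edges mu -> o' \in sk_edges mu ->
            sk_end mu o = sk_end mu o' -> o = o',
          4 <= #|skelV mu| &
          forall x y, connected_on (sk_adj mu) (skelV mu :\ x :\ y)]
  end.

Definition is_SPQR_tree : Prop :=
  [/\ is_tree /\ (forall mu, skel_wf mu /\ skel_kind_ok mu),
      (forall mu nu, t mu nu -> vend mu nu = vend nu mu) /\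
      (forall mu, isQ (kind mu) = (#|[set nu | t mu nu]| == 1)),
      (forall mu nu, t mu nu ->
         ~~ (isS (kind mu) && isS (kind nu)) /\ ~~ (isP (kind mu) && isP (kind nu))),
      (forall E, E \in Gedges g -> exists! mu, isQ (kind mu) /\ qend mu = E) &
      (* G is obtained by gluing the skeletons along twin virtual edges:
         every vertex of G occurs in the skeletons of a (nonempty) subtree,
         and adjacent skeletons share exactly the endpoints of their
         twin virtual edges *)
      [/\ forall x, exists mu, x \in skelV mu,
          forall x, connected_on t [set mu | x \in skelV mu] &
          forall mu nu, t mu nu -> skelV mu :&: skelV nu = vend mu nu]].

(* rooted at r: nodes of the subtree rooted at mu (mu <> r): those
   separated from r by mu *)
Definition subtree (r mu : N) : {set N} :=
  [set nu | ~~ connect [rel a b | [&& t a b, a != mu & b != mu]] r nu].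

(* edges of the pertinent graph of mu: real edges of the Q-nodes of the
   subtree rooted at mu *)
Definition pert_edges (r mu : N) : {set {set V}} :=
  [set qend nu | nu in subtree r mu & isQ (kind nu)].

Definition pert_deg (r mu : N) (x : V) : nat :=
  #|[set y | [set x; y] \in pert_edges r mu]|.

End SPQR.

(* Main.v *)
Require Import Defs.
From mathcomp Require Import all_boot.
From mathcomp Require Import fingroup perm.
From mathcomp Require Import zify.
Set Implicit Arguments. Unset Strict Implicit.

Lemma set2_eq (T : finType) (v y y' : T) : [set v; y] = [set v; y'] -> y' != v -> y = y'.
Proof.
move=> E ne; have : y' \in [set v; y'] by rewrite !inE eqxx orbT.
by rewrite -E !inE (negbTE ne) /= => /eqP.
Qed.

Lemma gedge_v (V : finType) (g : rel V) E v : symmetric g -> irreflexive g ->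
  E \in Gedges g -> v \in E -> exists y, E = [set v; y] /\ g v y.
Proof.
move=> gs gi /imsetP [p]; rewrite inE => gp -> {E}; rewrite !inE => /orP[]/eqP->.
  by exists p.2.
by exists p.1; rewrite setUC gs.
Qed.
Section TreeCount.
Variable T : finType.
Variable e : rel T.
Hypothesis esym : symmetric e.

Definition Ecnt (A : {set T}) :=
  #|[set p : T * T | [&& p.1 \in A, p.2 \in A & e p.1 p.2]]|.

Lemma Ecnt_mono (A B : {set T}) : A \subset B -> Ecnt A <= Ecnt B.
Proof.
move=> sAB; apply: subset_leq_card; apply/subsetP => p; rewrite !inE.
by case/and3P => h1 h2 ->; rewrite (subsetP sAB _ h1) (subsetP sAB _ h2).
Qed.

Lemma Ecnt_add (B : {set T}) a x : a \in B -> x \notin B -> e a x ->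
  Ecnt B + 2 <= Ecnt (x |: B).
Proof.
move=> aB xB eax; rewrite /Ecnt.
set S := [set p | _ ]; set S' := [set p | _].
have sub : S :|: [set (a,x); (x,a)] \subset S'.
  apply/subsetP => p; rewrite /S /S' !inE.
  case/or3P => [/and3P[h1 h2 h3]|/eqP->|/eqP->] /=.
  - by rewrite h1 h2 h3 !orbT.
  - by rewrite eqxx aB eax orbT.
  - by rewrite eqxx aB (esym x a) eax orbT.
have dis : S :&: [set (a,x); (x,a)] = set0.
  apply/setP => [[p1 p2]]; rewrite /S !inE /=.
  apply/negP => /andP[/and3P[h1 h2 _] /orP[/eqP[_ E]|/eqP[E _]]].
    by move: xB; rewrite -E h2.
  by move: xB; rewrite -E h1.
have ax : (a, x) != (x, a).
  apply/negP => /eqP[E _]; by move: xB; rewrite -E aB.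
have := subset_leq_card sub; rewrite cardsU dis cards0 cards2 ax; lia.
Qed.

Lemma cross (B : {set T}) (f : rel T) b y : b \in B -> y \notin B -> connect f b y ->
  exists a x, [/\ a \in B, x \notin B & f a x].
Proof.
move=> bB yB /connectP [p pp yE]; rewrite yE {y yE} in yB.
elim: p b bB pp yB => [|z p IH] b bB /=; first by rewrite bB.
move=> /andP[fbz pz] yl; case zB: (z \in B); first exact: IH zB pz yl.
by exists b, z; rewrite zB.
Qed.

Hypothesis econn : forall x y, connect e x y.

Lemma grow (B0 : {set T}) : B0 != set0 -> forall m, m <= #|T| - #|B0| ->
  exists B : {set T}, [/\ B0 \subset B, #|B| = #|B0| + m & Ecnt B0 + m.*2 <= Ecnt B].
Proof.
move=> ne; elim=> [|m IH] hm.
  by exists B0; rewrite addn0 double0 addn0 subxx.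
have [B [sB cB eB]] := IH (ltnW hm).
have [y yB] : exists y, y \notin B.
  apply/existsP; rewrite -negb_forall; apply/negP => /forallP allB.
  have : B = setT by apply/setP => z; rewrite inE allB.
  move=> BT; move: cB hm; rewrite BT cardsT; lia.
have [b bB0] := set0Pn _ ne; have bB := subsetP sB _ bB0.
have [a [x [aB xB eax]]] := cross bB yB (econn b y).
exists (x |: B); split.
- exact: subset_trans sB (subsetUr _ _).
- rewrite cardsU1 xB cB; lia.
- have := Ecnt_add aB xB eax; rewrite doubleS; lia.
Qed.

Lemma tree_bound (X : {set T}) : Ecnt setT = (#|T|).-1.*2 -> X != set0 ->
  Ecnt X <= (#|X|).-1.*2.
Proof.
move=> Et ne.
have [B [_ cB eB]] := grow ne (leqnn _).
have := Ecnt_mono (subsetT B); rewrite Et.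
have h1 : 0 < #|X| by rewrite card_gt0.
have h2 : #|X| <= #|T| by apply: max_card.
move: eB; rewrite -!muln2; lia.
Qed.

Lemma Ecnt_sum A : Ecnt A = \sum_(x in A) #|[set y in A | e x y]|.
Proof.
rewrite /Ecnt -sum1_card.
under [RHS]eq_bigr => x _ do rewrite -sum1_card.
have E x : \sum_(i in [set y in A | e x y]) 1 = \sum_(y | (y \in A) && e x y) 1.
  by apply: eq_bigl => y; rewrite inE.
under [RHS]eq_bigr => x _ do rewrite E.
rewrite pair_big_dep /=; apply: eq_bigl => [[p1 p2]]; rewrite !inE /=.
by [].
Qed.
End TreeCount.

Definition isPR k := match k with Pnode | Rnode => true | _ => false end.

Lemma cover2 (T : finType) (A : {set T}) (d : T) : #|A| <= 2 ->
  exists a b, A \subset [set a; b] /\ [set a; b] \subset d |: A.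
Proof.
move=> cA; have [A0|[a aA]] := set_0Vmem A.
  by exists d, d; rewrite A0 sub0set setUid subsetUl.
have [A1|[b bA]] := set_0Vmem (A :\ a).
  exists a, a; rewrite setUid sub1set !inE aA orbT; split=> //.
  apply/subsetP => z zA; rewrite inE; apply/negPn/negP => nz.
  have : z \in A :\ a by apply/setD1P.
  by rewrite A1 inE.
exists a, b; split.
  apply/subsetP => z zA; rewrite !inE; case: (z =P a) => //= /eqP nza.
  apply/negPn/negP => nzb.
  have : #|A :\ a :\ b| = 0.
    move: cA; rewrite (cardsD1 a A) aA (cardsD1 b (A :\ a)) bA; lia.
  move/eqP; rewrite cards_eq0 => /eqP E.
  have : z \in A :\ a :\ b by apply/setD1P; split=> //; apply/setD1P.
  by rewrite E inE.
apply/subsetP => z; rewrite !inE => /orP[]/eqP->; first by rewrite aA orbT.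
by move: bA; rewrite inE => /andP[_ ->]; rewrite orbT.
Qed.

Lemma sk_lb (V N : finType) (g : rel V) t kind qend vend skelV (x : N) (v : V) :
  skel_wf t kind qend vend skelV x -> skel_kind_ok g t kind qend vend skelV x ->
  ~~ isQ (kind x) -> v \in skelV x ->
  2 + isPR (kind x) <= sk_deg t kind qend vend x v.
Proof.
move=> [wf1 wf2]; rewrite /skel_kind_ok /sk_deg; case Hk : (kind x) => //= H _ vx.
- by case: H => _ -> //.
- case: H => c2 c3; apply: leq_trans c3 _; apply: subset_leq_card.
  apply/subsetP => o oE; rewrite inE oE /=; have [c sub] := wf1 o oE.
  have : sk_end qend vend x o == skelV x by rewrite eqEcard sub c c2.
  by move/eqP->.
- case: H => _ c4 Hc; rewrite leqNgt; apply/negP => lt.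
  set Es := [set o in sk_edges t kind x | v \in sk_end qend vend x o] in lt.
  set Nb := [set y | sk_adj t kind qend vend x v y].
  have cNb : #|Nb| <= 2.
    have <- : #|[set [set v; y] | y in Nb]| = #|Nb|.
      apply: card_in_imset => y1 y2; rewrite !inE => /andP[n1 _] /andP[n2 _] E.
      by apply: set2_eq E _; rewrite eq_sym.
    apply: (leq_trans _ (leq_trans (leq_imset_card (sk_end qend vend x) Es) _)); last by rewrite -ltnS.
    apply: subset_leq_card; apply/subsetP => w /imsetP [y]; rewrite inE.
    case/andP=> _ /exists_inP [o oE /eqP eo] -> {w}.
    by apply/imsetP; exists o => //; rewrite inE oE eo !inE eqxx.
  have [d dx dv] : exists2 d, d \in skelV x & d != v.
    have : 0 < #|skelV x :\ v| by move: c4; rewrite (cardsD1 v) vx; lia.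
    by case/card_gt0P => d; rewrite !inE => /andP[dv dx]; exists d.
  have [a [b [sNb sab]]] := cover2 d cNb.
  have vab : v \notin [set a; b].
    apply/negP => /(subsetP sab); rewrite !inE eq_sym (negbTE dv) /=.
    by rewrite /sk_adj eqxx.
  have [z zx zn] : exists2 z, z \in skelV x & z \notin v |: [set a; b].
    have h : #|v |: [set a; b]| <= 3 by rewrite cardsU1 cards2; case: (a != b); case: (v \notin _).
    have : 0 < #|skelV x :\: (v |: [set a; b])|.
      rewrite cardsD; have := subset_leq_card (subsetIr (skelV x) (v |: [set a; b])).
      move: c4 h; lia.
    by case/card_gt0P => z; rewrite inE => /andP[zn zx]; exists z.
  move: vab zn; rewrite !inE !negb_or => /andP[va vb] /and3P[zv za zb].
  have cvz := Hc a b v z; move: cvz.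
  rewrite /connected_on; move=> /(_ _ _) cvz.
  have {}cvz := cvz ltac:(by rewrite !inE va vb vx) ltac:(by rewrite !inE za zb zx).
  have [a' [y [a'v yv /and3P[_ yS ady]]]] := cross (B := [set v]) (set11 v) (ltac:(by rewrite inE) : z \notin [set v]) cvz.
  rewrite inE in a'v; move/eqP: a'v => ?; subst a'.
  move: yS; rewrite !inE => /and3P[yb ya _].
  have : y \in Nb by rewrite inE.
  move/(subsetP sNb); rewrite !inE; by rewrite (negbTE ya) (negbTE yb).
Qed.

Lemma path_ne (N : finType) (t : rel N) (mu : N) x p :
  x != mu -> path [rel a b | [&& t a b, a != mu & b != mu]] x p -> last x p != mu.
Proof.
elim: p x => [|z p IH] x //= xm /andP[/and3P[_ _ zm] pz]; exact: IH.
Qed.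

Lemma conn_ne (N : finType) (t : rel N) (mu : N) x y :
  x != mu -> connect [rel a b | [&& t a b, a != mu & b != mu]] x y -> y != mu.
Proof. move=> xm /connectP [p pp yE]; rewrite yE; exact: (@path_ne N t mu x p xm pp). Qed.

Unset Implicit Arguments.
Set Strict Implicit.

Theorem mainTheorem1 (V : finType) (g : rel V) (k : nat)
  (N : finType) (t : rel N) (kind : N -> spqr_kind) (qend : N -> {set V})
  (vend : N -> N -> {set V}) (skelV : N -> {set V})
  (r mu mu' : N) (v : V) :
  simple_graph g -> biconnected g -> planar g -> max_degree_le g k ->
  is_SPQR_tree g t kind qend vend skelV ->
  kind r = Qnode -> mu != r ->
  t mu mu' -> mu' \notin subtree t r mu ->
  v \in vend mu mu' ->
  ((kind mu' = Pnode \/ kind mu' = Rnode) ->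
      pert_deg t kind qend r mu v + 2 <= k) /\
  ((kind mu' = Snode \/ kind mu' = Qnode) ->
      pert_deg t kind qend r mu v + 1 <= k).
Proof.
move=> [gsym girr] _ _ Hdeg HS _ _ tmm' nsub vmm'.
move: HS; rewrite /is_SPQR_tree => -[[Htree Hsk] [Htwin Hleaf] _ HQ [Hcov Hconn Hint]].
have [tsym tirr tconn tcnt] := Htree.
set emu := [rel a b | [&& t a b, a != mu & b != mu]].
have crm' : connect emu r mu' by move: nsub; rewrite inE negbK.
have mm' : mu' != mu by apply/eqP => E; move: tmm'; rewrite E tirr.
move: (vmm'); rewrite -(Hint _ _ tmm') inE => /andP[vmu vmu'].
set W := [set x | connect emu mu' x & v \in skelV x].
set X := mu |: W.
set Qs := [set x in W | isQ (kind x)].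
have Wne x : x \in W -> x != mu by rewrite inE => /andP[/(conn_ne mm')].
have m'W : mu' \in W by rewrite inE connect0 vmu'.
have nbX x nu : x \in W -> t x nu -> v \in vend x nu -> nu \in X.
  move=> xW txn; rewrite -(Hint _ _ txn) inE => /andP[_ vnu].
  rewrite !inE; case: (nu =P mu) => //= /eqP num.
  move: (xW); rewrite inE => /andP[cx _]; rewrite vnu andbT.
  apply: connect_trans cx (connect1 _); by rewrite /= txn (Wne _ xW) num.
pose d x := #|[set y in X | t x y]|.
pose ext := isPR (kind mu').
have pw x : x \in X -> 2 + ((x == mu') && ext) <= d x + (x == mu) + (x \in Qs).
  case/setU1P => [->|xW].
    have -> : (mu == mu') = false by rewrite eq_sym (negbTE mm').
    have -> : (mu \in Qs) = false.
      by apply/negbTE/negP; rewrite inE => /andP[/Wne]; rewrite eqxx.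
    rewrite eqxx /= addn0.
    suff : 0 < d mu by move: (d mu) => n h; clear -h; rewrite /=; lia.
    by apply/card_gt0P; exists mu'; rewrite inE tmm' andbT; apply/setU1P; right.
  rewrite (negbTE (Wne _ xW)) addn0 inE xW /=.
  have [wf ko] := Hsk x.
  case xQ : (isQ (kind x)).
    have : (x == mu') && ext = false.
      by apply/negbTE/negP => /andP[/eqP E]; rewrite /ext -E; case: (kind x) xQ.
    move=> ->; suff : 0 < d x by move: (d x) => n h; clear -h; rewrite /=; lia.
    move: (Hleaf x); rewrite xQ => /esym/eqP c1.
    have [nu] : exists nu, nu \in [set nu | t x nu].
      by apply/card_gt0P; rewrite c1.
    rewrite inE => txn; apply/card_gt0P; exists nu; rewrite inE txn andbT.
    apply: (nbX _ _ xW txn).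
    move: ko; rewrite /skel_kind_ok; case: (kind x) xQ => // _ [_ _ Hs Hv].
    by rewrite (Hv _ txn) -Hs; move: xW; rewrite inE => /andP[].
  rewrite addn0.
  have vx : v \in skelV x by move: xW; rewrite inE => /andP[].
  have := sk_lb wf ko (negbT xQ) vx.
  have : (x == mu') && ext <= isPR (kind x).
    by case: (x =P mu') => //= ->.
  move=> h1 h2; apply: leq_trans (leq_trans _ h2) _; first by rewrite leq_add2l.
  rewrite /sk_deg /d.
  apply: leq_trans (leq_imset_card Some _); apply: subset_leq_card.
  apply/subsetP => o; rewrite !inE; case: o => [nu|]; last by rewrite xQ.
  move=> /andP[txn vn]; apply/imsetP; exists nu => //.
  by rewrite inE txn (nbX _ _ xW txn vn).
have mX : mu \in X by apply/setU1P; left.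
have m'X : mu' \in X by apply/setU1P; right.
have Xne : X != set0 by apply/set0Pn; exists mu.
have Ecnt_setT : Ecnt t setT = (#|N|).-1.*2.
  rewrite -tcnt; apply: eq_card => p; by rewrite !inE.
have tconn' : forall x y, connect t x y.
  move=> x y; have := tconn x y (in_setT x) (in_setT y).
  by rewrite (@eq_connect _ _ t) // => a b; rewrite /= !in_setT.
have tb := tree_bound tsym tconn' Ecnt_setT Xne.
have sumI : \sum_(x in X) (2 + ((x == mu') && ext)) <= \sum_(x in X) (d x + (x == mu) + (x \in Qs)).
  by apply: leq_sum.
rewrite !big_split /= in sumI.
rewrite sum_nat_const -Ecnt_sum in sumI.
have s1 : \sum_(i in X) (i == mu) = 1.
  rewrite (bigD1 mu) //= eqxx big1 // => i /andP[_ /negbTE ->] //.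
have s2 : \sum_(i in X) ((i == mu') && ext) = ext.
  rewrite (bigD1 mu') //= eqxx big1 ?addn0 // => i /andP[_ /negbTE ->] //.
have s3 : \sum_(i in X) (i \in Qs) = #|Qs|.
  rewrite -sum1_card big_mkcond /= [RHS]big_mkcond /=; apply: eq_bigr => i _.
  case iQ : (i \in Qs); case iX : (i \in X) => //.
  by move: iQ iX; rewrite !inE => /andP[-> _]; rewrite orbT.
rewrite s1 s2 s3 in sumI.
have cX : 0 < #|X| by rewrite card_gt0.
have Qbig : 1 + ext <= #|Qs|.
  move: sumI tb cX; rewrite -!muln2.
  move: (#|X|) (Ecnt t X) (#|Qs|) (ext) => a b c e h1 h2 h3; clear -h1 h2 h3; lia.
set Pset := [set y | [set v; y] \in pert_edges t kind qend r mu].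
set Ys := [set y | [exists x in Qs, qend x == [set v; y]]].
have QinfoQ x : isQ (kind x) -> qend x \in Gedges g /\ skelV x = qend x.
  move=> xQ; have [_ ko] := Hsk x; move: ko; rewrite /skel_kind_ok.
  by case: (kind x) xQ => // _ [_ ? ? _].
have Quniq x1 x2 : isQ (kind x1) -> isQ (kind x2) -> qend x1 = qend x2 -> x1 = x2.
  move=> q1 q2 E; have [G1 _] := QinfoQ _ q1.
  have [x0 [_ u]] := HQ _ G1.
  by rewrite -(u x1) ?(u x2) //; split.
have QsY : #|Qs| <= #|Ys|.
  rewrite -(card_in_imset (f := qend)); last first.
    move=> x1 x2; rewrite !inE => /andP[_ q1] /andP[_ q2]; exact: Quniq.
  apply: leq_trans (leq_imset_card (fun y => [set v; y]) Ys).
  apply: subset_leq_card; apply/subsetP => E /imsetP [x xQs ->] {E}.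
  move: (xQs); rewrite inE => /andP[xW xQ].
  have [G1 Hs] := QinfoQ _ xQ.
  have vx : v \in qend x by rewrite -Hs; move: xW; rewrite inE => /andP[].
  have [y [Ey _]] := gedge_v gsym girr G1 vx.
  apply/imsetP; exists y => //; rewrite inE; apply/exists_inP; exists x => //.
  by rewrite Ey.
have sub1 : Pset :|: Ys \subset [set y | g v y].
  apply/subsetP => y; rewrite !inE => /orP[].
    case/imsetP => nu; rewrite inE => /andP[_ nuQ] E.
    have [G1 _] := QinfoQ _ nuQ.
    have vn : v \in qend nu by rewrite -E !inE eqxx.
    have [y' [Ey' gy']] := gedge_v gsym girr G1 vn.
    have -> // : y = y'.
    apply: (set2_eq (v:=v) (y:=y) (y':=y')); first by rewrite E Ey'.
    by apply/negP => /eqP ye; move: gy'; rewrite ye girr.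
  case/exists_inP => x; rewrite inE => /andP[_ xQ] /eqP E.
  have [G1 _] := QinfoQ _ xQ.
  have vn : v \in qend x by rewrite E !inE eqxx.
  have [y' [Ey' gy']] := gedge_v gsym girr G1 vn.
  have -> // : y = y'.
  apply: (set2_eq (v:=v) (y:=y) (y':=y')); first by rewrite -E Ey'.
  by apply/negP => /eqP ye; move: gy'; rewrite ye girr.
have dis : Pset :&: Ys = set0.
  apply/setP => y; rewrite !inE; apply/negbTE/negP => /andP[].
  case/imsetP => nu; rewrite inE => /andP[nusub nuQ] E.
  case/exists_inP => x; rewrite inE => /andP[xW xQ] /eqP E'.
  have xnu : x = nu by apply: Quniq => //; rewrite E' E.
  move: nusub; rewrite -xnu inE => /negP; apply.
  move: xW; rewrite inE => /andP[cx _]; exact: connect_trans crm' cx.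
have h1 := subset_leq_card sub1; rewrite cardsU dis cards0 subn0 in h1.
have h2 := Hdeg v.
have -> : pert_deg t kind qend r mu v = #|Pset| by [].
rewrite /ext in Qbig.
move: h1 h2 QsY Qbig; move: (#|Pset|) (#|Ys|) (#|Qs|) (#|[set y | g v y]|) => a b c n h1 h2 h3 h4.
split=> [[]|[]] Hk; rewrite Hk /= in h4; clear -h1 h2 h3 h4; lia.
Qed.
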